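(* Let $\mathscr{F}=(\Omega,\sqsubseteq,\mathcal{E},\mathcal{A})$ where $(\Omega,\sqsubseteq,\mathcal{E})$ is a quasi-principal possibility frame whose poset has a maximum element, and $\mathcal{A}:\Omega\to\wp(\Omega)$ satisfies awareness expressibility: for all $\omega,\nu$, if $\nu\in\mathcal{A}(\omega)$ then $\downarrow\nu\in\mathcal{E}$. Consider the conditions: (i) (awareness joinability) for all $\omega,\nu\in\Omega$ and $E,E'\in\mathcal{E}$, if $\nu\in\mathcal{A}(\omega)$ and $\max(E\cap\downarrow\nu)\cup\max(E'\cap\downarrow\nu)\subseteq\mathcal{A}(\omega)$, then $\max((E\sqcup E')\cap\downarrow\nu)\subseteq\mathcal{A}(\omega)$; (ii) for all $\omega,\nu\in\Omega$ with $\nu\in\mathcal{A}(\omega)$, all $n\ge1$ and all $\nu_1,\dots,\nu_n\in\mathcal{A}(\omega)\cap\downarrow\nu$, we have $\max((\downarrow\nu_1\sqcup\dots\sqcup\downarrow\nu_n)\cap\downarrow\nu)\subseteq\mathcal{A}(\omega)$. Then (i) implies (ii). Conversely, if $\max(E)$ is finite for each $E\in\mathcal{E}$, then (ii) implies (i).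
   Context: For a poset $(\Omega,\sqsubseteq)$, $\downarrow E=\{\omega\mid\omega\sqsubseteq\nu\text{ for some }\nu\in E\}$, $\downarrow\nu=\downarrow\{\nu\}$; $\rho(E)=\{\omega\mid\forall\omega'\sqsubseteq\omega\ \exists\omega''\sqsubseteq\omega'\colon\omega''\in\downarrow E\}$; $\mathcal{RO}(\Omega,\sqsubseteq)=\{E\mid\rho(E)=E\}$ is a Boolean algebra under $\subseteq$ with meet $\cap$, join $E\sqcup F=\rho(E\cup F)$ and complement $\neg E=\{\omega\mid\forall\omega'\sqsubseteq\omega,\ \omega'\notin E\}$. $\max(E)=\{\omega\in E\mid\text{no }\nu\in E\text{ with }\omega\sqsubseteq\nu,\ \nu\not\sqsubseteq\omega\}$. A possibility frame $(\Omega,\sqsubseteq,\mathcal{E})$: $(\Omega,\sqsubseteq)$ a poset and $\mathcal{E}$ a nonempty subset of $\mathcal{RO}(\Omega,\sqsubseteq)$ closed under binary $\cap$ and $\neg$; it is quasi-principal if for every $E\in\mathcal{E}$ and $\omega\in E$, $\omega\in\downarrow\max(E)$. *)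

(* Defs.v *)
From Stdlib Require Import List.
Import ListNotations.

Section Poss.
Context {Omega : Type} (le : Omega -> Omega -> Prop).

Definition is_poset : Prop :=
  (forall x, le x x) /\
  (forall x y z, le x y -> le y z -> le x z) /\
  (forall x y, le x y -> le y x -> x = y).

Definition down (E : Omega -> Prop) : Omega -> Prop :=
  fun w => exists v, E v /\ le w v.
Definition down1 (v : Omega) : Omega -> Prop := down (fun x => x = v).

Definition rho (E : Omega -> Prop) : Omega -> Prop :=
  fun w => forall w', le w' w -> exists w'', le w'' w' /\ down E w''.

Definition regular_open (E : Omega -> Prop) : Prop := rho E = E.

Definition inter (E F : Omega -> Prop) : Omega -> Prop := fun w => E w /\ F w.
Definition union (E F : Omega -> Prop) : Omega -> Prop := fun w => E w \/ F w.

Definition join (E F : Omega -> Prop) : Omega -> Prop := rho (union E F).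

Definition neg (E : Omega -> Prop) : Omega -> Prop :=
  fun w => forall w', le w' w -> ~ E w'.

Definition maxs (E : Omega -> Prop) : Omega -> Prop :=
  fun w => E w /\ ~ (exists v, E v /\ le w v /\ ~ le v w).

Definition subset (E F : Omega -> Prop) : Prop := forall w, E w -> F w.

Definition possibility_frame (Ecal : (Omega -> Prop) -> Prop) : Prop :=
  is_poset /\
  (exists E, Ecal E) /\
  (forall E, Ecal E -> regular_open E) /\
  (forall E F, Ecal E -> Ecal F -> Ecal (inter E F)) /\
  (forall E, Ecal E -> Ecal (neg E)).

Definition quasi_principal (Ecal : (Omega -> Prop) -> Prop) : Prop :=
  forall E w, Ecal E -> E w -> down (maxs E) w.

Definition has_maximum : Prop := exists t, forall w, le w t.

Definition awareness_expressible (Ecal : (Omega -> Prop) -> Prop)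
  (A : Omega -> Omega -> Prop) : Prop :=
  forall w v, A w v -> Ecal (down1 v).

(* ↓ν1 ⊔ ... ⊔ ↓νn, for the nonempty list ν1 :: rest, joined left to right *)
Definition join_downs (v1 : Omega) (rest : list Omega) : Omega -> Prop :=
  fold_left (fun acc v => join acc (down1 v)) rest (down1 v1).

Definition awareness_joinability (Ecal : (Omega -> Prop) -> Prop)
  (A : Omega -> Omega -> Prop) : Prop :=
  forall w v E E', Ecal E -> Ecal E' -> A w v ->
    subset (union (maxs (inter E (down1 v))) (maxs (inter E' (down1 v)))) (A w) ->
    subset (maxs (inter (join E E') (down1 v))) (A w).

Definition condition_ii (A : Omega -> Omega -> Prop) : Prop :=
  forall w v, A w v ->
    forall (v1 : Omega) (rest : list Omega),
      Forall (fun u => A w u /\ down1 v u) (v1 :: rest) ->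
      subset (maxs (inter (join_downs v1 rest) (down1 v))) (A w).

Definition finite_set (E : Omega -> Prop) : Prop :=
  exists l : list Omega, forall w, E w <-> In w l.

End Poss.

(* Main.v *)
Require Import Defs.
From Stdlib Require Import List.
From Stdlib Require Import Classical FunctionalExtensionality PropExtensionality.

Section H.
Context {Omega : Type} (le : Omega -> Omega -> Prop).
Hypothesis Hpos : is_poset le.

Lemma dclosed E w w' : regular_open le E -> E w -> le w' w -> E w'.
Proof.
  destruct Hpos as [Hr [Ht _]]. intros HE Hw Hle.
  assert (H : rho le E w) by (rewrite HE; exact Hw).
  cut (rho le E w'); [rewrite HE; auto|].
  intros w'' H''. apply H. eapply Ht; eauto.
Qed.

Lemma join_eq E F : regular_open le E -> regular_open le F ->
  join le E F = neg le (inter (neg le E) (neg le F)).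
Proof.
  destruct Hpos as [Hr [Ht _]]. intros HE HF.
  apply functional_extensionality; intro w; apply propositional_extensionality.
  unfold join, rho, neg, inter, union, down; split.
  - intros H w' Hw' [N1 N2].
    destruct (H w' Hw') as [w'' [Hl [z [[Hz|Hz] Hwz]]]].
    + apply (N1 w'' Hl). eapply dclosed; eauto.
    + apply (N2 w'' Hl). eapply dclosed; eauto.
  - intros H w' Hw'. specialize (H w' Hw').
    apply not_and_or in H. destruct H as [H|H];
    apply not_all_ex_not in H; destruct H as [a Ha];
    apply imply_to_and in Ha; destruct Ha as [Ha1 Ha2];
    apply NNPP in Ha2; exists a; split; auto; exists a; split; auto.
Qed.

Lemma maxs_ext (S T : Omega -> Prop) x : (forall y, S y <-> T y) -> maxs le S x -> maxs le T x.
Proof.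
  intros Heq [H1 H2]. split. apply Heq; auto.
  intros [y [Hy R]]. apply H2. exists y. split; auto. apply Heq; auto.
Qed.

Lemma rho_ext (S T : Omega -> Prop) : (forall y, S y <-> T y) -> forall x, rho le S x <-> rho le T x.
Proof.
  intros Heq x; unfold rho, down; split; intros H w' Hw';
  destruct (H w' Hw') as [w'' [H1 [z [Hz H2]]]]; exists w''; split; auto;
  exists z; split; auto; apply Heq; auto.
Qed.

Lemma rho_absorb (acc Y D : Omega -> Prop) :
  (forall x, acc x <-> rho le Y x) ->
  forall x, rho le (union acc D) x <-> rho le (union Y D) x.
Proof.
  destruct Hpos as [Hr [Ht _]]. intros Heq x; unfold rho, down, union; split.
  - intros H w' Hw'. destruct (H w' Hw') as [w'' [H1 [z [[Hz|Hz] H2]]]].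
    + apply Heq in Hz. destruct (Hz w'' H2) as [w3 [H3 [z' [Hz' H4]]]].
      exists w3. split. eauto. exists z'. auto.
    + exists w''. split; auto. exists z; auto.
  - intros H w' Hw'. destruct (H w' Hw') as [w'' [H1 [z [[Hz|Hz] H2]]]].
    + exists w''. split; auto. exists z. split; auto. left. apply Heq.
      intros a Ha. exists a. split; auto. exists z. split; eauto.
    + exists w''. split; auto. exists z; auto.
Qed.

Lemma fold_rho : forall rest acc Y, (forall x, acc x <-> rho le Y x) ->
  forall x, fold_left (fun acc v0 => join le acc (down1 le v0)) rest acc x <->
    rho le (fun y => Y y \/ exists u, In u rest /\ le y u) x.
Proof.
  destruct Hpos as [Hr [Ht _]].
  induction rest as [|u rest IH]; intros acc Y Heq x; simpl.
  - rewrite Heq. apply rho_ext. intro y; split; auto. intros [H|[u [[] _]]]; auto.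
  - rewrite (IH _ (union Y (down1 le u))).
    + apply rho_ext. intro y; unfold union, down1, down; split.
      * intros [[H|[z [-> H]]]|[v [H1 H2]]]; auto. right; exists u; auto. right; exists v; auto.
      * intros [H|[v [[Hv|H1] H2]]].
        -- left; left; exact H.
        -- left; right; exists v; split; [symmetry; exact Hv|exact H2].
        -- right; exists v; split; assumption.
    + intro y. unfold join. apply rho_absorb. auto.
Qed.

Lemma down1_iff v x : down1 le v x <-> le x v.
Proof. unfold down1, down; split. intros [z [-> H]]; auto. eauto. Qed.

Lemma max_pair u v x : le u v -> maxs le (inter (down1 le u) (down1 le v)) x -> x = u.
Proof.
  destruct Hpos as [Hr [Ht Ha]]. intros Huv [[H1 H2] H3].
  apply down1_iff in H1. apply Ha; auto.
  apply NNPP; intro N. apply H3. exists u. split; [split; apply down1_iff; auto|]. auto.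
Qed.

End H.

Theorem lemma3p2 (Omega : Type) (le : Omega -> Omega -> Prop)
  (Ecal : (Omega -> Prop) -> Prop) (A : Omega -> Omega -> Prop) :
  possibility_frame le Ecal ->
  quasi_principal le Ecal ->
  has_maximum le ->
  awareness_expressible le Ecal A ->
  (awareness_joinability le Ecal A -> condition_ii le A) /\
  ((forall E, Ecal E -> finite_set (maxs le E)) ->
     condition_ii le A -> awareness_joinability le Ecal A).
Proof.
  intros [Hpos [Hne [Hro [Hint Hneg]]]] Hqp _ Hae.
  pose proof Hpos as [Hr [Ht Ha]].
  assert (Hjoin : forall E F, Ecal E -> Ecal F -> Ecal (join le E F)).
  { intros E F HE HF. rewrite join_eq; auto. }
  split.
  - intros Hi w v Hv v1 rest HF.
    inversion HF as [|? ? [Hv1a Hv1d] HFr]; subst.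
    unfold join_downs.
    assert (Gen : forall rest acc, Ecal acc ->
      subset (maxs le (inter acc (down1 le v))) (A w) ->
      Forall (fun u => A w u /\ down1 le v u) rest ->
      subset (maxs le (inter (fold_left (fun acc v0 => join le acc (down1 le v0)) rest acc) (down1 le v))) (A w)).
    { induction rest0 as [|u r IH]; intros acc Hacc Hs Hf; simpl; auto.
      inversion Hf as [|? ? [Hu1 Hu2] Hfr]; subst.
      apply IH; auto.
      - apply Hjoin; auto. eapply Hae; eauto.
      - apply Hi; auto. eapply Hae; eauto.
        intros x [Hx|Hx]; auto.
        apply (max_pair le Hpos) in Hx; auto. subst; auto. apply (down1_iff le); auto. }
    apply Gen; auto. eapply Hae; eauto.
    intros x Hx. apply (max_pair le Hpos) in Hx; auto. subst; auto. apply (down1_iff le); auto.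
  - intros Hfin Hii w v E E' HE HE' Hv Hsub x Hx.
    assert (Hdv : Ecal (down1 le v)) by (eapply Hae; eauto).
    destruct (Hfin _ (Hint _ _ HE Hdv)) as [lE HlE].
    destruct (Hfin _ (Hint _ _ HE' Hdv)) as [lE' HlE'].
    assert (Cov : forall y, (E y \/ E' y) -> le y v -> exists m, In m (lE ++ lE') /\ le y m).
    { intros y [Hy|Hy] Hyv.
      - destruct (Hqp _ y (Hint _ _ HE Hdv)) as [m [Hm Hym]].
        split; auto; apply (down1_iff le); auto.
        exists m; split; auto. apply in_or_app; left; apply HlE; auto.
      - destruct (Hqp _ y (Hint _ _ HE' Hdv)) as [m [Hm Hym]].
        split; auto; apply (down1_iff le); auto.
        exists m; split; auto. apply in_or_app; right; apply HlE'; auto. }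
    assert (Back : forall m, In m (lE ++ lE') -> (E m \/ E' m) /\ le m v /\ A w m).
    { intros m Hm. apply in_app_or in Hm. destruct Hm as [Hm|Hm].
      - apply HlE in Hm. pose proof Hm as Hm'. destruct Hm as [[H1 H2] _].
        apply (down1_iff le) in H2. split; auto. split; auto. apply Hsub. left; auto.
      - apply HlE' in Hm. pose proof Hm as Hm'. destruct Hm as [[H1 H2] _].
        apply (down1_iff le) in H2. split; auto. split; auto. apply Hsub. right; auto. }
    assert (S1 : forall y, inter (join le E E') (down1 le v) y ->
       forall y', le y' y -> exists y'', le y'' y' /\ exists m, In m (lE ++ lE') /\ le y'' m).
    { intros y [Hj Hyv] y' Hy'. apply (down1_iff le) in Hyv.
      destruct (Hj y' Hy') as [y'' [H1 [z [Hz H2]]]].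
      exists y''. split; auto. apply Cov.
      destruct Hz; [left|right]; eapply dclosed; eauto.
      eauto. }
    destruct (lE ++ lE') as [|v1 rest] eqn:HL.
    + destruct (S1 x (proj1 Hx) x (Hr x)) as [_ [_ [m [[] _]]]].
    + apply (Hii w v Hv v1 rest).
      * apply Forall_forall. intros m Hm. destruct (Back m Hm) as [_ [H1 H2]].
        split; auto. apply (down1_iff le); auto.
      * eapply maxs_ext; [|exact Hx]. intro y. unfold inter, join_downs.
        rewrite (fold_rho _ Hpos rest (down1 le v1) (down1 le v1)).
        2:{ intro z. assert (Hro1 : regular_open le (down1 le v1)).
            { apply Hro. apply Hae with w. apply (Back v1). left; auto. }
            rewrite Hro1. tauto. }
        split.
        -- intros [Hj Hyv]. split; auto. intros y' Hy'.
           destruct (S1 y (conj Hj Hyv) y' Hy') as [y'' [H1 [m [Hm H2]]]].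
           exists y''. split; auto. exists y''. split; auto.
           destruct Hm as [->|Hm]. left; apply (down1_iff le); auto. right; eauto.
        -- intros [Hj Hyv]. split; auto. intros y' Hy'.
           destruct (Hj y' Hy') as [y'' [H1 [z [Hz H2]]]].
           assert (Hm : exists m, In m (v1 :: rest) /\ le z m).
           { destruct Hz as [Hz|[u [Hu Hzu]]]. apply (down1_iff le) in Hz. exists v1; simpl; auto.
             exists u; simpl; auto. }
           destruct Hm as [m [Hm Hzm]]. destruct (Back m Hm) as [HmE _].
           exists y''. split; auto. exists m. split; eauto.
Qed.
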